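(* Let $\mathbb{P} = \mathbb{P}(c_1,c_2,c_3,c_4)$ be a weighted projective space with homogeneous coordinates $s_1,s_2,s_3,s_4$, and suppose $c_1 \ge c_2$ and $c_1 > c_i$ for $i=3,4$. Let $g_1,g_2 \in \mathbb{C}[s_3,s_4]$ be homogeneous of degree $c_1+c_2$, and suppose there is an automorphism $\sigma$ of $\mathbb{P}$ inducing an isomorphism \[ \sigma|_{H_1}\colon H_1 := (s_1 s_2 + g_1(s_3,s_4) = 0) \xrightarrow{\ \cong\ } H_2 := (s_1 s_2 + g_2(s_3,s_4) = 0) \] between these weighted hypersurfaces in $\mathbb{P}$. Then there is an automorphism $\tau$ of $\mathbb{P}(c_3,c_4)$ (with coordinates $s_3,s_4$) such that $g_1 = \tau^* g_2$. *)

(* Defs.v *)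
From HB Require Import structures.
From mathcomp Require Import all_boot all_algebra.
From mathcomp Require Import reals complex mpoly.
Set Implicit Arguments. Unset Strict Implicit. Unset Printing Implicit Defensive.
Import GRing.Theory.
Local Open Scope ring_scope.

Definition mweight (n : nat) (w : 'I_n -> nat) (m : 'X_{1..n}) : nat :=
  (\sum_(i < n) w i * m i)%N.

Definition whomog (R : ringType) (n : nat) (w : 'I_n -> nat) (d : nat)
  (p : {mpoly R[n]}) : Prop :=
  forall m, m \in msupp p -> mweight w m = d.

(* A graded C-algebra automorphism of the weighted polynomial ring
   R[x_0..x_{n-1}] (deg x_i = w i), given by the images phi_i of the
   coordinates (the pullback sigma^* x_i = phi_i); such automorphisms are the
   automorphisms of the weighted projective space P(w). *)
Definition graded_aut (R : ringType) (n : nat) (w : 'I_n -> nat)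
  (phi : n.-tuple {mpoly R[n]}) : Prop :=
  (forall i, whomog w (w i) (tnth phi i)) /\
  exists psi : n.-tuple {mpoly R[n]},
    (forall i, (tnth psi i) \mPo phi = 'X_i) /\
    (forall i, (tnth phi i) \mPo psi = 'X_i).

Definition w4 (c1 c2 c3 c4 : nat) : 'I_4 -> nat := tnth [tuple c1; c2; c3; c4].
Definition w2 (c3 c4 : nat) : 'I_2 -> nat := tnth [tuple c3; c4].

Definition emb34 (R : ringType) (g : {mpoly R[2]}) : {mpoly R[4]} :=
  g \mPo [tuple 'X_(inord 2 : 'I_4); 'X_(inord 3 : 'I_4)].

Definition hypF (R : ringType) (g : {mpoly R[2]}) : {mpoly R[4]} :=
  'X_(inord 0 : 'I_4) * 'X_(inord 1 : 'I_4) + emb34 g.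

(* Main.v *)
Require Import Defs.
From HB Require Import structures.
From mathcomp Require Import all_boot all_algebra.
From mathcomp Require Import reals complex mpoly.
From mathcomp Require Import ring.
From mathcomp Require Import zify.
Import GRing.Theory.
Local Open Scope ring_scope.

Section Gen.
Context (R : comNzRingType).

Lemma compX (n k : nat) (i : 'I_n) (lq : n.-tuple {mpoly R[k]}) :
  'X_i \mPo lq = tnth lq i.
Proof. by rewrite comp_mpolyXU -tnth_nth. Qed.

Lemma mcompA (n k l : nat) (p : {mpoly R[n]}) (lq : n.-tuple {mpoly R[k]})
  (lr : k.-tuple {mpoly R[l]}) :
  (p \mPo lq) \mPo lr = p \mPo [tuple (tnth lq i \mPo lr) | i < n].
Proof.
rewrite [p \mPo lq]comp_mpolyE [RHS]comp_mpolyE raddf_sum /=.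
apply: eq_bigr => m _; rewrite comp_mpolyZ rmorph_prod /=; congr (_ *: _).
by apply: eq_bigr => i _; rewrite rmorphXn tnth_mktuple.
Qed.

Lemma comp_ext (n k : nat) (p : {mpoly R[n]}) (t t' : n.-tuple {mpoly R[k]}) :
  (forall m, m \in msupp p -> \prod_(i < n) tnth t i ^+ m i = \prod_(i < n) tnth t' i ^+ m i) ->
  p \mPo t = p \mPo t'.
Proof.
move=> H; rewrite !comp_mpolyE; apply: eq_big_seq => m hm.
by rewrite H.
Qed.

Lemma mweightD (n : nat) (w : 'I_n -> nat) (m1 m2 : 'X_{1..n}) :
  Defs.mweight w (m1 + m2)%MM = (Defs.mweight w m1 + Defs.mweight w m2)%N.
Proof.
rewrite /Defs.mweight -big_split /=; apply: eq_bigr => i _.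
by rewrite mnmDE mulnDr.
Qed.

Lemma whomog0 (n : nat) w d : whomog w d (0 : {mpoly R[n]}).
Proof. by move=> m; rewrite msupp0. Qed.

Lemma whomogD (n : nat) w d (p q : {mpoly R[n]}) :
  whomog w d p -> whomog w d q -> whomog w d (p + q).
Proof.
move=> hp hq m /msuppD_le; rewrite mem_cat => /orP[]; [exact: hp|exact: hq].
Qed.

Lemma whomogZ (n : nat) w d c (p : {mpoly R[n]}) :
  whomog w d p -> whomog w d (c *: p).
Proof. by move=> hp m /msuppZ_le; apply: hp. Qed.

Lemma whomogM (n : nat) w d1 d2 (p q : {mpoly R[n]}) :
  whomog w d1 p -> whomog w d2 q -> whomog w (d1 + d2) (p * q).
Proof.
move=> hp hq m /msuppM_le /allpairsP [[m1 m2] /= [h1 h2 ->]].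
by rewrite mweightD hp // hq.
Qed.

Lemma whomog1 (n : nat) w : whomog w 0 (1 : {mpoly R[n]}).
Proof.
move=> m; rewrite -mpolyC1 msuppC oner_eq0 inE => /eqP ->.
by rewrite /Defs.mweight big1 // => i _; rewrite mnm0E muln0.
Qed.

Lemma whomogXU (n : nat) w (i : 'I_n) : whomog w (w i) ('X_i : {mpoly R[n]}).
Proof.
move=> m; rewrite msuppX inE => /eqP ->.
rewrite /Defs.mweight (bigD1 i) //= big1 ?addn0; first by rewrite mnm1E eqxx muln1.
by move=> j /negbTE hj; rewrite mnm1E eq_sym hj muln0.
Qed.

Lemma whomogX (n : nat) w d k (p : {mpoly R[n]}) :
  whomog w d p -> whomog w (d * k) (p ^+ k).
Proof.
move=> hp; elim: k => [|k ih]; first by rewrite muln0 expr0; exact: whomog1.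
by rewrite exprS mulnS; apply: whomogM.
Qed.

Lemma whomog_prod (n : nat) w (I : finType) (F : I -> {mpoly R[n]}) (D : I -> nat) :
  (forall i, whomog w (D i) (F i)) -> whomog w (\sum_i D i)%N (\prod_i F i).
Proof.
move=> hF; elim/big_rec2: _ => [|i d p _ hp]; first exact: whomog1.
exact: whomogM.
Qed.

Lemma whomog_sum (n : nat) w d (I : eqType) (s : seq I) (F : I -> {mpoly R[n]}) :
  (forall i, i \in s -> whomog w d (F i)) -> whomog w d (\sum_(i <- s) F i).
Proof.
move=> hF; rewrite big_seq; elim/big_rec: _ => [|i p hi hp]; first exact: whomog0.
by apply: whomogD => //; apply: hF.
Qed.

Lemma whomog_comp (n k : nat) w w' d (p : {mpoly R[n]}) (t : n.-tuple {mpoly R[k]}) :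
  whomog w d p -> (forall i, whomog w' (w i) (tnth t i)) -> whomog w' d (p \mPo t).
Proof.
move=> hp ht; rewrite comp_mpolyE; apply: whomog_sum => m hm.
apply: whomogZ; rewrite -(hp m hm) /Defs.mweight.
apply: whomog_prod => i; exact: whomogX.
Qed.

Lemma whomog_scale (n : nat) w d (p : {mpoly R[n]}) (c : R) :
  whomog w d p -> p \mPo [tuple c ^+ (w i) *: 'X_i | i < n] = c ^+ d *: p.
Proof.
move=> hp; rewrite comp_mpolyE {3}[p]mpolyE scaler_sumr; apply: eq_big_seq => m hm.
rewrite scalerA mulrC -scalerA; congr (_ *: _).
rewrite -(hp m hm) mpolyXE_id /Defs.mweight.
under eq_bigr => i _ do rewrite tnth_mktuple exprZn -exprM.
by rewrite scaler_prod -prodrXr.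
Qed.

End Gen.

Section Elim.
Context (R : comNzRingType) (n : nat).

Definition etup (j : 'I_n) : n.-tuple {mpoly R[n]} :=
  [tuple if i == j then 0 else 'X_i | i < n].

Lemma prod_etup j (m : 'X_{1..n}) : m j = 0%N ->
  \prod_(i < n) tnth (etup j) i ^+ m i = 'X_[m].
Proof.
move=> hm; rewrite mpolyXE_id; apply: eq_bigr => i _; rewrite tnth_mktuple.
by case: eqP => // ->; rewrite hm !expr0.
Qed.

Lemma elim_free (p : {mpoly R[n]}) j :
  (forall m, m \in msupp p -> m j = 0%N) -> p \mPo etup j = p.
Proof.
move=> H; rewrite comp_mpolyE; symmetry; rewrite {1}[p]mpolyE; apply: eq_big_seq => m hm.
by rewrite prod_etup // H.
Qed.

Lemma elim_lin (p : {mpoly R[n]}) j :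
  (forall m, m \in msupp p -> (m j != 0)%N -> m = U_(j)%MM) ->
  p = p@_U_(j) *: 'X_j + (p \mPo etup j).
Proof.
move=> H; rewrite comp_mpolyE.
have key m : m \in msupp p -> m != U_(j)%MM ->
    p@_m *: \prod_(i < n) tnth (etup j) i ^+ m i = p@_m *: 'X_[m].
  move=> hm hne; rewrite prod_etup //; apply/eqP; apply: contraR hne => /H ->//.
case: (boolP (U_(j)%MM \in msupp p)) => hU.
  rewrite {1}[p]mpolyE !(big_rem _ hU) /=.
  have -> : \prod_(i < n) tnth (etup j) i ^+ U_(j)%MM i = 0.
    rewrite (bigD1 j) //= tnth_mktuple eqxx mnm1E eqxx expr1 mul0r //.
  rewrite scaler0 add0r; congr (_ + _).
  apply: eq_big_seq => m hm; rewrite key //.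
    by move: hm; apply: mem_rem.
  by move: hm; rewrite mem_rem_uniq ?msupp_uniq // inE => /andP[].
rewrite memN_msupp_eq0 // scale0r add0r {1}[p]mpolyE.
apply: eq_big_seq => m hm; rewrite key //; apply: contraNneq hU => <- //.
Qed.

Lemma etup_idem j : [tuple tnth (etup j) i \mPo etup j | i < n] = etup j.
Proof.
apply: eq_from_tnth => i; rewrite !tnth_mktuple.
case: eqP => [_|]; first by rewrite comp_mpoly0.
by rewrite compX tnth_mktuple => /eqP/negbTE ->.
Qed.

End Elim.

Section Aut.
Context (R : fieldType) (n : nat) (w : 'I_n -> nat).

Lemma graded_aut_comp (phi1 phi2 : n.-tuple {mpoly R[n]}) :
  graded_aut w phi1 -> graded_aut w phi2 ->
  graded_aut w [tuple tnth phi1 i \mPo phi2 | i < n].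
Proof.
case=> h1 [psi1 [a1 b1]] [h2 [psi2 [a2 b2]]]; split.
  by move=> i; rewrite tnth_mktuple; apply: whomog_comp (h1 i) h2.
exists [tuple tnth psi2 i \mPo psi1 | i < n]; split => i; rewrite tnth_mktuple mcompA.
  have -> : [tuple tnth psi1 j \mPo [tuple tnth phi1 k \mPo phi2 | k < n] | j < n] = phi2.
    apply: eq_from_tnth => j; rewrite !tnth_mktuple -mcompA a1 compX //.
  exact: a2.
have -> : [tuple tnth phi2 j \mPo [tuple tnth psi2 k \mPo psi1 | k < n] | j < n] = psi1.
  apply: eq_from_tnth => j; rewrite !tnth_mktuple -mcompA b2 compX //.
exact: b1.
Qed.

Lemma graded_aut_scale (c : R) : c != 0 ->
  graded_aut w [tuple c ^+ (w i) *: 'X_i | i < n].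
Proof.
move=> c0; split.
  by move=> i; rewrite tnth_mktuple; apply/whomogZ/whomogXU.
exists [tuple c^-1 ^+ (w i) *: 'X_i | i < n]; split => i;
  rewrite !tnth_mktuple comp_mpolyZ compX tnth_mktuple scalerA -exprMn
  ?mulVf ?mulfV // expr1n scale1r //.
Qed.
End Aut.

Lemma w4_premise (R : ringType) (c1 c2 c3 c4 d : nat) (p : {mpoly R[4]}) :
  (0 < c1)%N -> (0 < c2)%N -> (0 < c3)%N -> (0 < c4)%N -> (d <= c1)%N ->
  whomog (w4 c1 c2 c3 c4) d p ->
  forall m, m \in msupp p -> (m (inord 0) != 0)%N -> m = U_(inord 0)%MM.
Proof.
move=> c10 h2 h3 h4 hd hp m hm.
have := hp m hm; rewrite /Defs.mweight !big_ord_recl big_ord0 /= => hw.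
have e0 : (inord 0 : 'I_4) = ord0 by apply: val_inj; rewrite /= inordK.
rewrite e0 => hm0.
have hm1 : (c1 <= c1 * m ord0)%N by rewrite leq_pmulr // lt0n.
rewrite /w4 /tnth /= in hw.
have hc1 : (c1 * m ord0 = c1)%N by lia.
have hx1 : (c2 * m (lift ord0 ord0) = 0)%N by lia.
have hx2 : (c3 * m (lift ord0 (lift ord0 ord0)) = 0)%N by lia.
have hx3 : (c4 * m (lift ord0 (lift ord0 (lift ord0 ord0))) = 0)%N by lia.
move/eqP: hc1; rewrite -{2}[c1]muln1 eqn_pmul2l // => /eqP hc1.
move/eqP: hx1; rewrite muln_eq0 (gtn_eqF h2) /= => /eqP hx1.
move/eqP: hx2; rewrite muln_eq0 (gtn_eqF h3) /= => /eqP hx2.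
move/eqP: hx3; rewrite muln_eq0 (gtn_eqF h4) /= => /eqP hx3.
apply/mnmP => i; rewrite mnm1E.
case: i => [[|[|[|[|i]]]] hi] //=.
- have -> : Ordinal hi = ord0 by apply: val_inj.
  by [].
- have -> : Ordinal hi = lift ord0 ord0 by apply: val_inj.
  by [].
- have -> : Ordinal hi = lift ord0 (lift ord0 ord0) by apply: val_inj.
  by [].
- have -> : Ordinal hi = lift ord0 (lift ord0 (lift ord0 ord0)) by apply: val_inj.
  by [].
Qed.

Lemma tnthL (T : Type) (a b c d : T) k : (k < 4)%N ->
  tnth [tuple a; b; c; d] (inord k) = nth a [:: a; b; c; d] k.
Proof. by move=> hk; rewrite (tnth_nth a) inordK. Qed.

Lemma tnthL2 (T : Type) (a b : T) k : (k < 2)%N ->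
  tnth [tuple a; b] (inord k) = nth a [:: a; b] k.
Proof. by move=> hk; rewrite (tnth_nth a) inordK. Qed.

Lemma tuple4 (T : Type) (t : 4.-tuple T) :
  t = [tuple tnth t (inord 0); tnth t (inord 1); tnth t (inord 2); tnth t (inord 3)].
Proof.
apply: eq_from_tnth => i; have x := tnth t ord0.
by case: i => [[|[|[|[|i]]]] hi]; rewrite ?(tnth_nth x) /= ?inordK.
Qed.

Lemma tuple2 (T : Type) (t : 2.-tuple T) :
  t = [tuple tnth t (inord 0); tnth t (inord 1)].
Proof.
apply: eq_from_tnth => i; have x := tnth t ord0.
by case: i => [[|[|i]] hi]; rewrite ?(tnth_nth x) /= ?inordK.
Qed.

Lemma inord_eq4 k l : (k < 4)%N -> (l < 4)%N -> ((inord k : 'I_4) == inord l) = (k == l).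
Proof. by move=> hk hl; rewrite -val_eqE /= !inordK. Qed.

Lemma mweightU (n : nat) (w : 'I_n -> nat) (j : 'I_n) : Defs.mweight w U_(j)%MM = w j.
Proof.
rewrite /Defs.mweight (bigD1 j) //= big1 ?addn0; first by rewrite mnm1E eqxx muln1.
by move=> i /negbTE hi; rewrite mnm1E eq_sym hi muln0.
Qed.

Lemma Xneq0 (R : idomainType) (n : nat) (i : 'I_n) : ('X_i : {mpoly R[n]}) != 0.
Proof.
apply/negP => /eqP h; have := mcoeffXU R i i; rewrite h mcoeff0 eqxx => /eqP.
by rewrite eq_sym oner_eq0.
Qed.

Section Main.
Variable C : fieldType.
Local Notation X k := ('X_(inord k : 'I_4) : {mpoly C[4]}).
Local Notation Y k := ('X_(inord k : 'I_2) : {mpoly C[2]}).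
Local Notation e0 := (@etup C 4 (inord 0)).

Lemma tnth_e0 k : (k < 4)%N -> tnth e0 (inord k) = if k == 0%N then 0 else X k.
Proof. by move=> hk; rewrite tnth_mktuple inord_eq4. Qed.

Lemma e0_comp (l : nat) (t : 4.-tuple {mpoly C[l]}) :
  [tuple tnth e0 i \mPo t | i < 4] = [tuple 0; tnth t (inord 1); tnth t (inord 2); tnth t (inord 3)].
Proof.
rewrite [LHS]tuple4 !tnth_mktuple !inord_eq4 //= comp_mpoly0 !compX //.
Qed.

Lemma free0 (l : nat) (s : {mpoly C[4]}) (t : 4.-tuple {mpoly C[l]}) :
  s \mPo e0 = s ->
  s \mPo t = s \mPo [tuple 0; tnth t (inord 1); tnth t (inord 2); tnth t (inord 3)].
Proof. by move=> hs; rewrite -{1}hs mcompA e0_comp. Qed.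

Lemma emb_comp (l : nat) (g : {mpoly C[2]}) (t : 4.-tuple {mpoly C[l]}) :
  emb34 g \mPo t = g \mPo [tuple tnth t (inord 2); tnth t (inord 3)].
Proof.
rewrite /emb34 mcompA [[tuple _ | i < 2]]tuple2 !tnth_mktuple !tnthL2 //= !compX //.
Qed.

Lemma comp2 (l l' : nat) (g : {mpoly C[2]}) (a b : {mpoly C[l]}) (t : l.-tuple {mpoly C[l']}) :
  (g \mPo [tuple a; b]) \mPo t = g \mPo [tuple a \mPo t; b \mPo t].
Proof. by rewrite mcompA [[tuple _ | i < 2]]tuple2 !tnth_mktuple !tnthL2. Qed.

End Main.

Section Fin.
Variable C : fieldType.
Local Notation X k := ('X_(inord k : 'I_4) : {mpoly C[4]}).
Local Notation Y k := ('X_(inord k : 'I_2) : {mpoly C[2]}).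
Local Notation e0 := (@etup C 4 (inord 0)).

Lemma idtuple2 : [tuple 'X_i | i < 2] = [tuple Y 0; Y 1] :> 2.-tuple {mpoly C[2]}.
Proof. by rewrite [LHS]tuple2 !tnth_mktuple. Qed.

Lemma finish (c1 c2 c3 c4 : nat) (g1 g2 : {mpoly C[2]}) (sigma psi : 4.-tuple {mpoly C[4]})
  (lam : C)
  (hom : forall i, whomog (w4 c1 c2 c3 c4) (w4 c1 c2 c3 c4 i) (tnth sigma i))
  (hps : forall i, tnth psi i \mPo sigma = 'X_i)
  (hsp : forall i, tnth sigma i \mPo psi = 'X_i)
  (hs2 : tnth sigma (inord 2) \mPo e0 = tnth sigma (inord 2))
  (hs3 : tnth sigma (inord 3) \mPo e0 = tnth sigma (inord 3))
  (hH : tnth sigma (inord 0) * tnth sigma (inord 1) +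
        (g2 \mPo [tuple tnth sigma (inord 2); tnth sigma (inord 3)]) = lam *: hypF g1)
  (hK : exists ii, exists k : C, (ii < 2)%N /\ k != 0 /\ tnth sigma (inord ii) = k%:MP * X 1)
  (hPi : exists pi0 : {mpoly C[2]}, forall ii, (ii < 2)%N ->
      tnth sigma (inord ii) \mPo [tuple pi0; 0; Y 0; Y 1] = 0) :
  exists tau : 2.-tuple {mpoly C[2]},
    graded_aut (w2 c3 c4) tau /\ g2 \mPo tau = lam *: g1.
Proof.
pose z : 4.-tuple {mpoly C[2]} := [tuple 0; 0; Y 0; Y 1].
have hz1 : forall ii, (ii < 2)%N -> X ii \mPo z = 0.
  by move=> [|[|]] // _; rewrite compX tnthL.
have hsz : forall ii, (ii < 2)%N -> tnth sigma (inord ii) \mPo z = 0 \/ True.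
  by right.
case: hK => ii [k [hii [k0 hk]]].
pose tau : 2.-tuple {mpoly C[2]} :=
  [tuple tnth sigma (inord 2) \mPo z; tnth sigma (inord 3) \mPo z].
exists tau; split; last first.
  have := congr1 (fun p : {mpoly C[4]} => comp_mpoly z p) hH => /=.
  rewrite rmorphD rmorphM /= comp2 comp_mpolyZ /hypF rmorphD rmorphM /= !compX emb_comp.
  rewrite !tnthL //= mul0r add0r -idtuple2 comp_mpoly_id.
  have -> : (tnth sigma (inord 0) \mPo z) * (tnth sigma (inord 1) \mPo z) = 0.
    move: hii hk; case: ii => [|[|]] // _ ->;
      by rewrite rmorphM /= comp_mpolyC compX tnthL //= ?mulr0 ?mul0r.
  by rewrite add0r.
have w4E : forall kk, (kk < 4)%N -> w4 c1 c2 c3 c4 (inord kk) = nth c1 [:: c1; c2; c3; c4] kk.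
  by move=> kk hkk; rewrite /w4 tnthL.
have w2E : forall kk, (kk < 2)%N -> w2 c3 c4 (inord kk) = nth c3 [:: c3; c4] kk.
  by move=> kk hkk; rewrite /w2 tnthL2.
have hzh : forall j, whomog (w2 c3 c4) (w4 c1 c2 c3 c4 j) (tnth z j).
  case=> [[|[|[|[|j]]]] hj] //=; try exact: whomog0.
  - have -> : w4 c1 c2 c3 c4 (Ordinal hj) = w2 c3 c4 (inord 0).
      by rewrite w2E // -w4E //; congr w4; apply: val_inj; rewrite /= inordK.
    exact: whomogXU.
  - have -> : w4 c1 c2 c3 c4 (Ordinal hj) = w2 c3 c4 (inord 1).
      by rewrite w2E // -w4E //; congr w4; apply: val_inj; rewrite /= inordK.
    exact: whomogXU.
split.
  case=> [[|[|j]] hj] //=.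
  - have -> : w2 c3 c4 (Ordinal hj) = w4 c1 c2 c3 c4 (inord 2).
      by rewrite w4E // -w2E //; congr w2; apply: val_inj; rewrite /= inordK.
    exact: whomog_comp (hom _) hzh.
  - have -> : w2 c3 c4 (Ordinal hj) = w4 c1 c2 c3 c4 (inord 3).
      by rewrite w4E // -w2E //; congr w2; apply: val_inj; rewrite /= inordK.
    exact: whomog_comp (hom _) hzh.
have hpsi1 : tnth psi (inord 1) \mPo z = 0.
  have e : k%:MP * tnth psi (inord 1) = 'X_(inord ii).
    by rewrite -(hsp (inord ii)) hk rmorphM /= comp_mpolyC compX.
  have -> : tnth psi (inord 1) = k^-1%:MP * 'X_(inord ii).
    by rewrite -e mulrA -mpolyCM mulVf // mpolyC1 mul1r.
  by rewrite rmorphM /= hz1 // mulr0.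
pose psi' : 2.-tuple {mpoly C[2]} :=
  [tuple tnth psi (inord 2) \mPo z; tnth psi (inord 3) \mPo z].
case: hPi => pi0 hpi.
pose pi : 4.-tuple {mpoly C[2]} := [tuple pi0; 0; Y 0; Y 1].
have hpz2 : tnth sigma (inord 2) \mPo pi = tnth sigma (inord 2) \mPo z.
  by rewrite (@free0 _ _ _ pi hs2) (@free0 _ _ _ z hs2) !tnthL.
have hpz3 : tnth sigma (inord 3) \mPo pi = tnth sigma (inord 3) \mPo z.
  by rewrite (@free0 _ _ _ pi hs3) (@free0 _ _ _ z hs3) !tnthL.
have hsigpi : [tuple tnth sigma i \mPo pi | i < 4] =
   [tuple 0; 0; tnth sigma (inord 2) \mPo z; tnth sigma (inord 3) \mPo z].
  by rewrite [LHS]tuple4 !tnth_mktuple hpi // hpi // hpz2 hpz3.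
have hztau : [tuple tnth z i \mPo tau | i < 4] =
   [tuple 0; 0; tnth sigma (inord 2) \mPo z; tnth sigma (inord 3) \mPo z].
  by rewrite [LHS]tuple4 !tnth_mktuple !tnthL //= comp_mpoly0 !compX !tnthL2.
have hzpsi : forall kk, (kk < 2)%N -> 
  tnth sigma (inord kk.+2) \mPo [tuple tnth z i \mPo psi' | i < 4] = Y kk.
  move=> kk hkk.
  have hs : tnth sigma (inord kk.+2) \mPo e0 = tnth sigma (inord kk.+2).
    by case: kk hkk => [|[|]].
  transitivity ('X_(inord kk.+2) \mPo z); last by case: kk hkk hs => [|[|]] // _ _; rewrite compX tnthL.
  rewrite -(hsp (inord kk.+2)) mcompA [RHS](@free0 _ _ _ _ hs) [LHS](@free0 _ _ _ _ hs).
  by rewrite !tnth_mktuple hpsi1 !tnthL //= comp_mpoly0 !compX !tnthL2.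
exists psi'; split; case=> [[|[|j]] hj] //=.
- have -> : Ordinal hj = inord 0 by apply: val_inj; rewrite /= inordK.
  rewrite /psi' tnthL2 //= mcompA hztau -hsigpi -mcompA hps compX tnthL //.
- have -> : Ordinal hj = inord 1 by apply: val_inj; rewrite /= inordK.
  rewrite /psi' tnthL2 //= mcompA hztau -hsigpi -mcompA hps compX tnthL //.
- have -> : Ordinal hj = inord 0 by apply: val_inj; rewrite /= inordK.
  by rewrite /tau tnthL2 //= mcompA (hzpsi 0%N).
- have -> : Ordinal hj = inord 1 by apply: val_inj; rewrite /= inordK.
  by rewrite /tau tnthL2 //= mcompA (hzpsi 1%N).
Qed.
End Fin.

Section Core.
Variable C : fieldType.
Local Notation X k := ('X_(inord k : 'I_4) : {mpoly C[4]}).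
Local Notation Y k := ('X_(inord k : 'I_2) : {mpoly C[2]}).
Local Notation e0 := (@etup C 4 (inord 0)).

Lemma small_free (c1 c2 c3 c4 d : nat) (p : {mpoly C[4]}) :
  (0 < c1)%N -> (0 < c2)%N -> (0 < c3)%N -> (0 < c4)%N -> (d < c1)%N ->
  whomog (w4 c1 c2 c3 c4) d p -> p \mPo e0 = p.
Proof.
move=> h1 h2 h3 h4 hd hp.
have hl := @elim_lin _ _ _ _ (@w4_premise _ _ _ _ _ _ _ h1 h2 h3 h4 (ltnW hd) hp).
have a0 : p@_U_(inord 0) = 0.
  have [//|hn] := eqVneq (p@_U_(inord 0)) 0.
  have hm : U_(inord 0)%MM \in msupp p by rewrite mcoeff_msupp.
  have := hp _ hm; rewrite mweightU /w4 tnthL //= => hc; lia.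
by rewrite {2}hl a0 scale0r add0r.
Qed.

Lemma core (c1 c2 c3 c4 : nat)
  (hc1 : (0 < c1)%N) (hc2 : (0 < c2)%N) (hc3 : (0 < c3)%N) (hc4 : (0 < c4)%N)
  (h12 : (c2 <= c1)%N) (h13 : (c3 < c1)%N) (h14 : (c4 < c1)%N)
  (g1 g2 : {mpoly C[2]}) (sigma : 4.-tuple {mpoly C[4]})
  (hsigma : graded_aut (w4 c1 c2 c3 c4) sigma) (lam : C) (lam0 : lam != 0)
  (hH : hypF g2 \mPo sigma = lam *: hypF g1) :
  exists tau : 2.-tuple {mpoly C[2]},
    graded_aut (w2 c3 c4) tau /\ g2 \mPo tau = lam *: g1.
Proof.
case: hsigma => hom [psi [hps hsp]].
have w4E : forall kk, (kk < 4)%N -> w4 c1 c2 c3 c4 (inord kk) = nth c1 [:: c1; c2; c3; c4] kk.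
  by move=> kk hkk; rewrite /w4 tnthL.
have hom' : forall kk, (kk < 4)%N -> whomog (w4 c1 c2 c3 c4) (nth c1 [:: c1; c2; c3; c4] kk) (tnth sigma (inord kk)).
  by move=> kk hkk; rewrite -w4E //.
have hs2 : tnth sigma (inord 2) \mPo e0 = tnth sigma (inord 2).
  exact: small_free hc1 hc2 hc3 hc4 h13 (hom' 2%N isT).
have hs3 : tnth sigma (inord 3) \mPo e0 = tnth sigma (inord 3).
  exact: small_free hc1 hc2 hc3 hc4 h14 (hom' 3%N isT).
have hF : hypF g2 \mPo sigma = tnth sigma (inord 0) * tnth sigma (inord 1) +
        (g2 \mPo [tuple tnth sigma (inord 2); tnth sigma (inord 3)]).
  by rewrite /hypF rmorphD rmorphM /= !compX emb_comp.
have d0 := @elim_lin _ _ _ _ (@w4_premise _ _ _ _ _ _ _ hc1 hc2 hc3 hc4 (leqnn c1) (hom' 0%N isT)).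
have d1 := @elim_lin _ _ _ _ (@w4_premise _ _ _ _ _ _ _ hc1 hc2 hc3 hc4 h12 (hom' 1%N isT)).
set s0 := tnth sigma (inord 0) in hF hsp d0.
set s1 := tnth sigma (inord 1) in hF hsp d1.
set a0 := s0@_U_(inord 0) in d0.
set a1 := s1@_U_(inord 0) in d1.
set q0 := s0 \mPo e0 in d0.
set q1 := s1 \mPo e0 in d1.
set G := g2 \mPo _ in hF.
have hq0 : q0 \mPo e0 = q0 by rewrite /q0 mcompA etup_idem.
have hq1 : q1 \mPo e0 = q1 by rewrite /q1 mcompA etup_idem.
have hG : G \mPo e0 = G by rewrite /G comp2 hs2 hs3.
have hE : emb34 g1 \mPo e0 = emb34 g1.
  by rewrite emb_comp !tnth_mktuple !inord_eq4.
have hX0 : X 0 \mPo e0 = 0 by rewrite compX tnth_mktuple eqxx.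
have hX1 : X 1 \mPo e0 = X 1 by rewrite compX tnth_mktuple inord_eq4.
have H : (a0%:MP * X 0 + q0) * (a1%:MP * X 0 + q1) + G = lam%:MP * (X 0 * X 1 + emb34 g1).
  by rewrite !mul_mpolyC -d0 -d1 -hF hH.
have H' : q0 * q1 + G = lam%:MP * emb34 g1.
  have := congr1 (fun p : {mpoly C[4]} => comp_mpoly e0 p) H => /=.
  rewrite !(rmorphD, rmorphM) /= !comp_mpolyC hX0 hX1 hq0 hq1 hG hE.
  by rewrite !mulr0 !add0r mul0r add0r.
have HQ : X 0 * (a0%:MP * a1%:MP * X 0 + a0%:MP * q1 + a1%:MP * q0 - lam%:MP * X 1) = 0.
  have -> : X 0 * (a0%:MP * a1%:MP * X 0 + a0%:MP * q1 + a1%:MP * q0 - lam%:MP * X 1) =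
    (((a0%:MP * X 0 + q0) * (a1%:MP * X 0 + q1) + G) - lam%:MP * (X 0 * X 1 + emb34 g1))
    - ((q0 * q1 + G) - lam%:MP * emb34 g1) by ring.
  by rewrite H H' !subrr.
move/eqP: HQ; rewrite mulf_eq0 (negbTE (Xneq0 _ _ _)) /= => /eqP HQ.
have HQ2 : a0%:MP * q1 + a1%:MP * q0 - lam%:MP * X 1 = 0.
  have := congr1 (fun p : {mpoly C[4]} => comp_mpoly e0 p) HQ => /=.
  by rewrite !(rmorphD, rmorphM, rmorphN) /= !comp_mpolyC hX0 hX1 hq0 hq1 mulr0 add0r mpolyC0.
have HA : a0 * a1 = 0.
  have : (a0 * a1)%:MP * X 0 = 0.
    have -> : (a0 * a1)%:MP * X 0 =
      (a0%:MP * a1%:MP * X 0 + a0%:MP * q1 + a1%:MP * q0 - lam%:MP * X 1) -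
      (a0%:MP * q1 + a1%:MP * q0 - lam%:MP * X 1) by rewrite mpolyCM; ring.
    by rewrite HQ HQ2 subrr.
  by move/eqP; rewrite mulf_eq0 (negbTE (Xneq0 _ _ _)) orbF mpolyC_eq0 => /eqP.
have hH2 : s0 * s1 + G = lam *: hypF g1 by rewrite -hF hH.
pose z : 4.-tuple {mpoly C[2]} := [tuple 0; 0; Y 0; Y 1].
have hqz : forall (q : {mpoly C[4]}) pi0, q \mPo e0 = q ->
    q \mPo [tuple pi0; 0; Y 0; Y 1] = q \mPo z.
  by move=> q pi0 hq; rewrite -{1}hq mcompA e0_comp !tnthL.
have hX1pi : forall pi0 (k : C), (k%:MP * X 1) \mPo [tuple pi0; 0; Y 0; Y 1] = 0.
  by move=> pi0 k; rewrite rmorphM /= comp_mpolyC compX tnthL // mulr0.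
have [a1z|a1nz] := eqVneq a1 0.
  have e : a0%:MP * q1 = lam%:MP * X 1.
    by apply/eqP; rewrite -subr_eq0 -HQ2 a1z mpolyC0 mul0r addr0.
  have ha0 : a0 != 0.
    apply/eqP => ha; move: e; rewrite ha mpolyC0 mul0r => /esym/eqP.
    by rewrite mulf_eq0 mpolyC_eq0 (negbTE lam0) (negbTE (Xneq0 _ _ _)).
  have hs1 : s1 = (a0^-1 * lam)%:MP * X 1.
    rewrite d1 a1z scale0r add0r.
    have -> : q1 = a0^-1%:MP * (a0%:MP * q1) by rewrite mulrA -mpolyCM mulVf // mpolyC1 mul1r.
    by rewrite e mulrA -mpolyCM.
  apply: (@finish C c1 c2 c3 c4 g1 g2 sigma psi lam hom hps hsp hs2 hs3 hH2).
    exists 1%N, (a0^-1 * lam); split => //; split => //.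
    by rewrite mulf_neq0 // invr_eq0.
  exists (- (a0^-1) *: (q0 \mPo z)) => -[|[|]] // _.
    rewrite -/s0 d0 rmorphD /= comp_mpolyZ compX tnthL //= (hqz _ _ hq0).
    by rewrite scalerA mulrN mulfV // scaleN1r addNr.
  by rewrite -/s1 hs1 hX1pi.
have a0z : a0 = 0.
  by move/eqP: HA; rewrite mulf_eq0 (negbTE a1nz) orbF => /eqP.
have e : a1%:MP * q0 = lam%:MP * X 1.
  by apply/eqP; rewrite -subr_eq0 -HQ2 a0z mpolyC0 mul0r add0r.
have hs0 : s0 = (a1^-1 * lam)%:MP * X 1.
  rewrite d0 a0z scale0r add0r.
  have -> : q0 = a1^-1%:MP * (a1%:MP * q0) by rewrite mulrA -mpolyCM mulVf // mpolyC1 mul1r.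
  by rewrite e mulrA -mpolyCM.
apply: (@finish C c1 c2 c3 c4 g1 g2 sigma psi lam hom hps hsp hs2 hs3 hH2).
  exists 0%N, (a1^-1 * lam); split => //; split => //.
  by rewrite mulf_neq0 // invr_eq0.
exists (- (a1^-1) *: (q1 \mPo z)) => -[|[|]] // _.
  by rewrite -/s0 hs0 hX1pi.
rewrite -/s1 d1 rmorphD /= comp_mpolyZ compX tnthL //= (hqz _ _ hq1).
by rewrite scalerA mulrN mulfV // scaleN1r addNr.
Qed.
End Core.

Import Num.Theory Num.Def.

Theorem lemma3p1 (R : realType) (c1 c2 c3 c4 : nat)
  (hc1 : (0 < c1)%N) (hc2 : (0 < c2)%N) (hc3 : (0 < c3)%N) (hc4 : (0 < c4)%N)
  (h12 : (c2 <= c1)%N) (h13 : (c3 < c1)%N) (h14 : (c4 < c1)%N)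
  (g1 g2 : {mpoly R[i][2]})
  (hg1 : whomog (w2 c3 c4) (c1 + c2) g1) (hg2 : whomog (w2 c3 c4) (c1 + c2) g2)
  (sigma : 4.-tuple {mpoly R[i][4]})
  (hsigma : graded_aut (w4 c1 c2 c3 c4) sigma)
  (hH : exists lam : R[i], lam != 0 /\ hypF g2 \mPo sigma = lam *: hypF g1) :
  exists tau : 2.-tuple {mpoly R[i][2]},
    graded_aut (w2 c3 c4) tau /\ g1 = g2 \mPo tau.
Proof.
case: hH => lam [lam0 hH].
have [tau [htau hg]] := @core _ _ _ _ _ hc1 hc2 hc3 hc4 h12 h13 h14 _ _ _ hsigma _ lam0 hH.
have hd : (0 < c1 + c2)%N by rewrite addn_gt0 hc1.
pose t := (c1 + c2).-root (lam^-1).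
have ht : t ^+ (c1 + c2) = lam^-1 by rewrite /t rootCK.
have t0 : t != 0.
  apply/eqP => t0; move: ht; rewrite t0 expr0n.
  case: (c1 + c2)%N hd => // n _ /= /esym/eqP; rewrite invr_eq0 (negbTE lam0) //.
pose D : 2.-tuple {mpoly R[i][2]} := [tuple t ^+ (w2 c3 c4 j) *: 'X_j | j < 2].
exists [tuple tnth D j \mPo tau | j < 2]; split.
  exact: (@graded_aut_comp _ _ _ _ _ (@graded_aut_scale _ _ _ _ t0) htau).
rewrite -mcompA (@whomog_scale _ _ _ _ _ t hg2) comp_mpolyZ hg scalerA ht mulVf // scale1r //.
Qed.
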